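(* Let $X$ be a finite set and $k$ an integer with $k\ge 5$ and $|X|-k\ge 7$. Let $\mathcal{F}$ be a clone on $X$ such that either $g^*\in\mathcal{F}$, where $g^*(x_1,x_2,x_3)=x_2$ if $x_2=x_3$ and $g^*(x_1,x_2,x_3)=x_1$ otherwise, or (weaker) for every one-to-one $\bar a^*\in X^3$ there is $g_{\bar a^*}\in\mathcal{F}$ with $g_{\bar a^*}(\bar a^* )=a^*_1$ and $g_{\bar a^*}(\bar a)=g^*(\bar a)$ for every $\bar a\in X^3$ with a repetition. Let $\mathfrak{C}$ be a nonempty symmetric family of choice functions for $\binom{X}{k}$ closed under every $f\in\mathcal{F}$. Then $\mathfrak{C}$ is full.
   Context: A clone on $X$: set of finitary operations on $X$ containing all projections and closed under composition. $\binom{X}{k}=\{Y\subseteq X:|Y|=k\}$; a choice function $c$ satisfies $c(Y)\in Y$. Symmetric: for every permutation $\pi$ of $X$ and $c\in\mathfrak{C}$, $(\pi*c)(Y)=\pi^{-1}(c(\pi(Y)))$ is in $\mathfrak{C}$. Closed under $f$ ($n$-place): for $c_1,\dots,c_n\in\mathfrak{C}$, $Y\mapsto f(c_1(Y),\dots,c_n(Y))$ is in $\mathfrak{C}$. Full: every choice function for $\binom{X}{k}$ is in $\mathfrak{C}$. *)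

(* Defs.v *)
From mathcomp Require Import all_boot all_fingroup.
Set Implicit Arguments. Unset Strict Implicit. Unset Printing Implicit Defensive.

Definition op (X : finType) (n : nat) := {ffun 'I_n -> X} -> X.

(* A clone: a family of sets of finitary operations, containing all projections,
   closed under composition, and (since it is a *set* of functions) closed under
   extensional equality. *)
Definition is_clone (X : finType) (F : forall n, op X n -> Prop) : Prop :=
  [/\ (forall n f g, F n f -> (forall a, f a = g a) -> F n g),
      (forall n (i : 'I_n), F n (fun a => a i)) &
      (forall n m (f : op X n) (gs : 'I_n -> op X m),
          F n f -> (forall i, F m (gs i)) ->
          F m (fun a => f [ffun i => gs i a]))].

Definition kset (X : finType) (k : nat) := {Y : {set X} | #|Y| == k}.

Definition choice_fun (X : finType) (k : nat) (c : {ffun kset X k -> X}) : Prop :=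
  forall Y : kset X k, c Y \in val Y.

Lemma kset_perm_card (X : finType) (k : nat) (p : {perm X}) (Y : kset X k) :
  #|p @: val Y| == k.
Proof. rewrite card_imset; [exact: (valP Y) | exact: perm_inj]. Qed.

Definition kset_perm (X : finType) (k : nat) (p : {perm X}) (Y : kset X k) : kset X k :=
  exist _ (p @: val Y) (kset_perm_card p Y).

Definition perm_act (X : finType) (k : nat) (p : {perm X}) (c : {ffun kset X k -> X})
  : {ffun kset X k -> X} := [ffun Y => (p^-1)%g (c (kset_perm p Y))].

Definition symmetric_family (X : finType) (k : nat) (C : {ffun kset X k -> X} -> Prop) :=
  forall (p : {perm X}) c, C c -> C (perm_act p c).

Definition closed_under (X : finType) (k n : nat) (C : {ffun kset X k -> X} -> Prop)
  (f : op X n) : Prop :=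
  forall cs : 'I_n -> {ffun kset X k -> X}, (forall i, C (cs i)) ->
    C [ffun Y => f [ffun i => cs i Y]].

Definition full (X : finType) (k : nat) (C : {ffun kset X k -> X} -> Prop) :=
  forall c, choice_fun c -> C c.

Definition tup3 (X : finType) (x1 x2 x3 : X) : {ffun 'I_3 -> X} :=
  [ffun i : 'I_3 => match val i with 0 => x1 | 1 => x2 | _ => x3 end].

Definition gstar (X : finType) : op X 3 :=
  fun a => if a (inord 1) == a (inord 2) then a (inord 1) else a (inord 0).

(* Main.v *)
Require Import Defs.
From mathcomp Require Import all_boot all_fingroup.
From mathcomp Require Import zify.
Set Implicit Arguments. Unset Strict Implicit. Unset Printing Implicit Defensive.

Definition g3 (X : eqType) (x y z : X) := if y == z then y else x.
Definition inj3 (X : eqType) (x y z : X) := [&& x != y, x != z & y != z].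

Lemma tup3E (X : finType) (x y z : X) :
  [/\ tup3 x y z (inord 0) = x, tup3 x y z (inord 1) = y & tup3 x y z (inord 2) = z].
Proof. by rewrite !ffunE /= !inordK. Qed.

Lemma gstar_tup3 (X : finType) (x y z : X) : gstar (tup3 x y z) = g3 x y z.
Proof. by rewrite /gstar /g3; case: (tup3E x y z) => -> -> ->. Qed.

Lemma tup3_ninj (X : finType) (x y z : X) : ~~ inj3 x y z -> ~~ injectiveb (tup3 x y z).
Proof.
case: (tup3E x y z) => E0 E1 E2.
rewrite /inj3 !negb_and !negbK => H; apply/injectiveP => inj.
have ne01 : (inord 0 : 'I_3) != inord 1 by apply/eqP => /(congr1 val) /=; rewrite !inordK.
have ne02 : (inord 0 : 'I_3) != inord 2 by apply/eqP => /(congr1 val) /=; rewrite !inordK.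
have ne12 : (inord 1 : 'I_3) != inord 2 by apply/eqP => /(congr1 val) /=; rewrite !inordK.
case/or3P: H => /eqP E.
- by move: ne01; rewrite (inj (inord 0) (inord 1)) ?eqxx // E0 E1.
- by move: ne02; rewrite (inj (inord 0) (inord 2)) ?eqxx // E0 E2.
- by move: ne12; rewrite (inj (inord 1) (inord 2)) ?eqxx // E1 E2.
Qed.

Definition sel3 (T : Type) (c1 c2 c3 : T) (i : 'I_3) : T :=
  match val i with 0 => c1 | 1 => c2 | _ => c3 end.

Lemma sel3_tup3 (X : finType) (k : nat) (c1 c2 c3 : {ffun kset X k -> X}) Y :
  [ffun i => sel3 c1 c2 c3 i Y] = tup3 (c1 Y) (c2 Y) (c3 Y).
Proof. by apply/ffunP => -[[|[|[|i]]] Hi]; rewrite !ffunE. Qed.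

Definition good_op (X : finType) (m : op X 3) := forall a : {ffun 'I_3 -> X}, ~~ injectiveb a -> m a = gstar a.

Lemma g3_maj (X : eqType) (v x : X) :
  [/\ g3 v v x = v, g3 v x v = v & g3 x v v = v].
Proof. by rewrite /g3 eqxx; split => //; case: eqP. Qed.

Lemma exists_op (X : finType) (F : forall n, op X n -> Prop) (x1 x2 x3 z1 z2 z3 : X) :
  2 < #|X| ->
  (F 3 (@gstar X) \/
   (forall a1 a2 a3 : X, a1 != a2 -> a1 != a3 -> a2 != a3 ->
      exists g : op X 3, F 3 g /\ g (tup3 a1 a2 a3) = a1 /\
        (forall a : {ffun 'I_3 -> X}, ~~ injectiveb a -> g a = gstar a))) ->
  ~~ inj3 x1 x2 x3 || ~~ inj3 z1 z2 z3 ->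
  exists m, [/\ F 3 m, good_op m, m (tup3 x1 x2 x3) = g3 x1 x2 x3 &
                 m (tup3 z1 z2 z3) = g3 z1 z2 z3].
Proof.
move=> X3 [Fg|Hw] Hni.
  by exists (@gstar X); split => //; rewrite gstar_tup3.
have ginj : forall a1 a2 a3 : X, inj3 a1 a2 a3 -> exists g : op X 3,
   [/\ F 3 g, good_op g & g (tup3 a1 a2 a3) = g3 a1 a2 a3].
  move=> a1 a2 a3 /and3P [h1 h2 h3].
  have [g [Fg [E G]]] := Hw a1 a2 a3 h1 h2 h3.
  by exists g; split => //; rewrite E /g3 (negbTE h3).
case Ix: (inj3 x1 x2 x3).
  have [g [Fg G E]] := ginj _ _ _ Ix.
  exists g; split => //; rewrite G ?gstar_tup3 //; apply: tup3_ninj.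
  by move: Hni; rewrite Ix.
case Iz: (inj3 z1 z2 z3).
  have [g [Fg G E]] := ginj _ _ _ Iz.
  by exists g; split => //; rewrite G ?gstar_tup3 //; apply: tup3_ninj; rewrite Ix.
have [a [b [c [_ [hab hbc hca]]]]] := card_gt2P X3.
have [g [Fg G E]] : exists g : op X 3, [/\ F 3 g, good_op g & g (tup3 a b c) = g3 a b c].
  by apply: ginj; rewrite /inj3 hab hbc eq_sym hca.
by exists g; split => //; rewrite G ?gstar_tup3 //; apply: tup3_ninj; rewrite ?Ix ?Iz.
Qed.

Record ctx (X : finType) (k : nat) (C : {ffun kset X k -> X} -> Prop) := Ctx {
  cx_ch : forall c, C c -> choice_fun c;
  cx_sym : symmetric_family C;
  cx_ne : exists c, C c;
  cx_op : forall c1 c2 c3 Z1 Z2, C c1 -> C c2 -> C c3 ->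
     ~~ inj3 (c1 Z1) (c2 Z1) (c3 Z1) || ~~ inj3 (c1 Z2) (c2 Z2) (c3 Z2) ->
     exists c, [/\ C c, c Z1 = g3 (c1 Z1) (c2 Z1) (c3 Z1) & c Z2 = g3 (c1 Z2) (c2 Z2) (c3 Z2)];
  cx_maj : forall c1 c2 c3, C c1 -> C c2 -> C c3 ->
     exists c, C c /\ forall Z, ~~ inj3 (c1 Z) (c2 Z) (c3 Z) -> c Z = g3 (c1 Z) (c2 Z) (c3 Z);
  cx_k : 5 <= k }.

Lemma BP (X : finType) k C (H : @ctx X k C) (t : {ffun kset X k -> X}) :
  (forall Z1 Z2, exists c, [/\ C c, c Z1 = t Z1 & c Z2 = t Z2]) -> C t.
Proof.
move=> Hp.
suff: forall n (S : {set kset X k}), #|S| <= n -> exists c, C c /\ {in S, forall Z, c Z = t Z}.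
  move=> /(_ _ setT (leqnn _)) [c [Cc Hc]].
  by have -> : t = c by apply/ffunP => Z; rewrite Hc ?inE.
elim=> [|n IH] S hS.
  have [c Cc] := cx_ne H; exists c; split => // Z ZS.
  by move: hS; rewrite leqn0 => /eqP/cards0_eq E; rewrite E inE in ZS.
have [->|[Z1 Z1S]] := set_0Vmem S.
  by have [c Cc] := cx_ne H; exists c; split => // Z; rewrite inE.
have [S1|[Z2 Z2S]] := set_0Vmem (S :\ Z1).
  have [c [Cc E1 _]] := Hp Z1 Z1; exists c; split => // Z ZS.
  case: (Z =P Z1) => [->//|/eqP ne].
  have : Z \in S :\ Z1 by rewrite !inE ne ZS.
  by rewrite S1 inE.
have [S2|[Z3 Z3S]] := set_0Vmem (S :\ Z1 :\ Z2).
  have [c [Cc E1 E2]] := Hp Z1 Z2; exists c; split => // Z ZS.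
  case: (Z =P Z1) => [->//|/eqP ne1]; case: (Z =P Z2) => [->//|/eqP ne2].
  have : Z \in S :\ Z1 :\ Z2 by rewrite !inE ne1 ne2 ZS.
  by rewrite S2 inE.
move: Z2S Z3S; rewrite !inE => /andP [n21 Z2S] /and3P [n32 n31 Z3S].
have lt Z : Z \in S -> #|S :\ Z| <= n.
  by move=> ZS; move: hS; rewrite (cardsD1 Z S) ZS.
have [c1 [C1 H1]] := IH _ (lt _ Z1S).
have [c2 [C2 H2]] := IH _ (lt _ Z2S).
have [c3 [C3 H3]] := IH _ (lt _ Z3S).
have [c [Cc Hc]] := cx_maj H C1 C2 C3.
exists c; split => // Z ZS.
case: (Z =P Z1) => [E|/eqP ne1].
  subst Z; have e2 : c2 Z1 = t Z1 by apply: H2; rewrite !inE eq_sym n21.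
  have e3 : c3 Z1 = t Z1 by apply: H3; rewrite !inE eq_sym n31.
  rewrite Hc; last by rewrite e2 e3 /inj3 eqxx !andbF.
  by rewrite e2 e3; case: (g3_maj (t Z1) (c1 Z1)).
case: (Z =P Z2) => [E|/eqP ne2].
  subst Z; have e1 : c1 Z2 = t Z2 by apply: H1; rewrite !inE ne1.
  have e3 : c3 Z2 = t Z2 by apply: H3; rewrite !inE eq_sym n32.
  rewrite Hc; last by rewrite e1 e3 /inj3 eqxx !andbF.
  by rewrite e1 e3; case: (g3_maj (t Z2) (c2 Z2)).
have e1 : c1 Z = t Z by apply: H1; rewrite !inE ne1.
have e2 : c2 Z = t Z by apply: H2; rewrite !inE ne2.
rewrite Hc; last by rewrite e1 e2 /inj3 eqxx.
by rewrite e1 e2; case: (g3_maj (t Z) (c3 Z)).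
Qed.

Definition Real (X : finType) k (C : {ffun kset X k -> X} -> Prop) (Z1 Z2 : kset X k) (y1 y2 : X) :=
  exists c, [/\ C c, c Z1 = y1 & c Z2 = y2].

Lemma kset_permK (X : finType) k (p : {perm X}) (Z : kset X k) :
  kset_perm p^-1 (kset_perm p Z) = Z.
Proof.
apply: val_inj => /=; rewrite -imset_comp (eq_imset _ (permK p)) imset_id //.
Qed.

Lemma mem_kset_perm (X : finType) k (p : {perm X}) (Z : kset X k) y :
  (p y \in val (kset_perm p Z)) = (y \in val Z).
Proof. by rewrite /= mem_imset //; apply: perm_inj. Qed.

Lemma real_perm (X : finType) k C (H : @ctx X k C) Z1 Z2 y1 y2 (p : {perm X}) :
  Real C Z1 Z2 y1 y2 -> Real C (kset_perm p Z1) (kset_perm p Z2) (p y1) (p y2).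
Proof.
case=> c [Cc E1 E2]; exists (perm_act p^-1 c); split; first exact: cx_sym H _ _ Cc.
  by rewrite ffunE invgK kset_permK E1.
by rewrite ffunE invgK kset_permK E2.
Qed.

Lemma fiber_perm (T : finType) (L : eqType) (f g : T -> L) :
  (forall l, #|[pred x | f x == l]| = #|[pred x | g x == l]|) ->
  exists p : {perm T}, forall x, g (p x) = f x.
Proof.
move=> Hc.
pose h x := nth x (enum [pred y | g y == f x]) (index x (enum [pred y | f y == f x])).
have hx x : index x (enum [pred y | f y == f x]) < size (enum [pred y | g y == f x]).
  by rewrite -cardE -Hc cardE index_mem mem_enum inE.
have gh x : g (h x) = f x.
  by have := mem_nth x (hx x); rewrite mem_enum inE => /eqP.
have hinj : injective h.
  move=> x y E; have fxy : f x = f y by rewrite -gh E gh.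
  move: E; rewrite /h fxy => /eqP; rewrite (set_nth_default y) ?nth_uniq ?enum_uniq //.
  all: try by rewrite -fxy.
  by move/eqP; apply: (index_inj x); rewrite mem_enum inE ?fxy.
exists (perm hinj) => x; rewrite permE; exact: gh.
Qed.

Lemma card_lab (T : finType) (A B : {set T}) b1 b2 :
  #|[pred x | (x \in A, x \in B) == (b1, b2)]| =
  #|[set x | ((x \in A) == b1) && ((x \in B) == b2)]|.
Proof. by apply: eq_card => x; rewrite !inE xpair_eqE. Qed.

Lemma card_lab2 (T : finType) (A B : {set T}) b1 b2 :
  #|[set x | ((x \in A) == b1) && ((x \in B) == b2)]| =
  if b1 then (if b2 then #|A :&: B| else #|A| - #|A :&: B|)
  else (if b2 then #|B| - #|A :&: B| else #|T| - (#|A| + #|B| - #|A :&: B|)).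
Proof.
case: b1; case: b2.
- by apply: eq_card => x; rewrite !inE !eqb_id.
- by rewrite -cardsD; apply: eq_card => x; rewrite !inE !eqb_id eqbF_neg andbC.
- by rewrite setIC -cardsD; apply: eq_card => x; rewrite !inE !eqb_id eqbF_neg.
- rewrite -cardsU -(cardsC (A :|: B)) addKn; apply: eq_card => x.
  by rewrite !inE !eqbF_neg negb_or.
Qed.

Lemma pair_perm (X : finType) k (Z1 Z2 W1 W2 : kset X k) :
  #|val Z1 :&: val Z2| = #|val W1 :&: val W2| ->
  exists p : {perm X}, kset_perm p Z1 = W1 /\ kset_perm p Z2 = W2.
Proof.
move=> Hi.
have [|p Hp] := @fiber_perm X _ (fun x => (x \in val Z1, x \in val Z2))
                             (fun x => (x \in val W1, x \in val W2)).
  case=> b1 b2; rewrite !card_lab !card_lab2 Hi.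
  by rewrite (eqP (valP Z1)) (eqP (valP Z2)) (eqP (valP W1)) (eqP (valP W2)).
have H1 y : (y \in val W1) = (p^-1%g y \in val Z1).
  by have := Hp (p^-1%g y); rewrite permKV => -[].
have H2 y : (y \in val W2) = (p^-1%g y \in val Z2).
  by have := Hp (p^-1%g y); rewrite permKV => -[].
exists p; split; apply: val_inj; apply/setP => y;
  by rewrite -{1}(permKV p y) mem_imset ?H1 ?H2 //; apply: perm_inj.
Qed.

Lemma tperm_mem (X : finType) (Z : {set X}) u v x :
  (u \in Z) = (v \in Z) -> (tperm u v x \in Z) = (x \in Z).
Proof. by move=> E; case: tpermP => [->|->|]. Qed.

Lemma kset_tperm (X : finType) k (Z : kset X k) u v :
  (u \in val Z) = (v \in val Z) -> kset_perm (tperm u v) Z = Z.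
Proof.
move=> E; apply: val_inj; apply/setP => y /=.
by rewrite -{1}(tpermK u v y) mem_imset ?tperm_mem //; apply: perm_inj.
Qed.

Lemma real_move (X : finType) k C (H : @ctx X k C) Z1 Z2 y1 y2 y1' y2' :
  Real C Z1 Z2 y1 y2 ->
  (y1 \in val Z1) = (y1' \in val Z1) -> (y1 \in val Z2) = (y1' \in val Z2) ->
  (y2 \in val Z1) = (y2' \in val Z1) -> (y2 \in val Z2) = (y2' \in val Z2) ->
  (y1 == y2) = (y1' == y2') -> Real C Z1 Z2 y1' y2'.
Proof.
move=> R a1 a2 b1 b2 e.
have := real_perm H (tperm y1 y1') R.
rewrite !kset_tperm // tpermL; set z := tperm y1 y1' y2 => R1.
have z1 : (z \in val Z1) = (y2' \in val Z1) by rewrite tperm_mem.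
have z2 : (z \in val Z2) = (y2' \in val Z2) by rewrite tperm_mem.
have := real_perm H (tperm z y2') R1.
rewrite !kset_tperm // tpermL.
case: (y1 =P y2) e => [E|/eqP ne] /esym e.
  by move: (e) => /eqP <-; rewrite /z -E tpermL tperm1 perm1.
rewrite tpermD //.
  apply: contra ne => /eqP E; apply/eqP; apply: (@perm_inj _ (tperm y1 y1')).
  by rewrite tpermL; exact: (esym E).
by rewrite eq_sym e.
Qed.

Lemma transport (X : finType) k C (H : @ctx X k C) (Z1 Z2 : kset X k) (y1 y2 : X) (W1 W2 : kset X k) (x1 x2 : X) :
  Real C Z1 Z2 y1 y2 -> y1 \in val Z1 -> y2 \in val Z2 -> x1 \in val W1 -> x2 \in val W2 ->
  #|val Z1 :&: val Z2| = #|val W1 :&: val W2| ->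
  (y1 \in val Z2) = (x1 \in val W2) -> (y2 \in val Z1) = (x2 \in val W1) ->
  (y1 == y2) = (x1 == x2) -> Real C W1 W2 x1 x2.
Proof.
move=> R h1 h2 g1 g2 hc e1 e2 e3.
have [p [E1 E2]] := pair_perm hc.
have := real_perm H p R; rewrite E1 E2 => R'.
apply: (real_move H R').
- by rewrite -{1}E1 mem_kset_perm h1 g1.
- by rewrite -{1}E2 mem_kset_perm e1.
- by rewrite -{1}E1 mem_kset_perm e2.
- by rewrite -{1}E2 mem_kset_perm h2 g2.
- by rewrite (inj_eq perm_inj).
Qed.

Lemma real_swap (X : finType) k C Z1 Z2 (y1 y2 : X) :
  @Real X k C Z1 Z2 y1 y2 -> Real C Z2 Z1 y2 y1.
Proof. by case=> c [? ? ?]; exists c. Qed.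


Lemma rule (X : finType) k C (H : @ctx X k C) Z1 Z2 (x1 x2 x3 z1 z2 z3 : X) :
  Real C Z1 Z2 x1 z1 -> Real C Z1 Z2 x2 z2 -> Real C Z1 Z2 x3 z3 ->
  ~~ inj3 x1 x2 x3 || ~~ inj3 z1 z2 z3 ->
  Real C Z1 Z2 (g3 x1 x2 x3) (g3 z1 z2 z3).
Proof.
case=> [c1 [C1 <- <-]] [c2 [C2 <- <-]] [c3 [C3 <- <-]] Hn.
by have [c [Cc E1 E2]] := cx_op H C1 C2 C3 Hn; exists c.
Qed.

Lemma memneq (X : finType) (S : {set X}) x y : x \in S -> y \notin S -> (x == y) = false.
Proof. by move=> hx; apply: contraNF => /eqP <-. Qed.

Definition T1 (X : finType) k C (Z1 Z2 : kset X k) := forall y1 y2 : X,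
  y1 \in val Z1 -> y1 \notin val Z2 -> y2 \in val Z2 -> y2 \notin val Z1 -> Real C Z1 Z2 y1 y2.
Definition T2 (X : finType) k C (Z1 Z2 : kset X k) := forall y1 y2 : X,
  y1 \in val Z1 -> y1 \notin val Z2 -> y2 \in val Z1 -> y2 \in val Z2 -> Real C Z1 Z2 y1 y2.
Definition T3 (X : finType) k C (Z1 Z2 : kset X k) := forall y1 y2 : X,
  y1 \in val Z1 -> y1 \in val Z2 -> y2 \in val Z2 -> y2 \notin val Z1 -> Real C Z1 Z2 y1 y2.
Definition T4 (X : finType) k C (Z1 Z2 : kset X k) := forall y : X,
  y \in val Z1 -> y \in val Z2 -> Real C Z1 Z2 y y.
Definition T5 (X : finType) k C (Z1 Z2 : kset X k) := forall y1 y2 : X,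
  y1 \in val Z1 -> y1 \in val Z2 -> y2 \in val Z1 -> y2 \in val Z2 -> y1 != y2 ->
  Real C Z1 Z2 y1 y2.


Lemma T1_of (X : finType) k C (H : @ctx X k C) (Z1 Z2 W1 W2 : kset X k) (x1 x2 : X) :
  Real C W1 W2 x1 x2 -> x1 \in val W1 -> x1 \notin val W2 -> x2 \in val W2 -> x2 \notin val W1 ->
  #|val W1 :&: val W2| = #|val Z1 :&: val Z2| -> T1 C Z1 Z2.
Proof.
move=> R a1 a2 a3 a4 hc y1 y2 b1 b2 b3 b4.
apply: (transport H R) => //; rewrite ?(negbTE a2) ?(negbTE a4) ?(negbTE b2) ?(negbTE b4) //.
by rewrite (memneq a1 a4) (memneq b1 b4).
Qed.

Lemma T2_of (X : finType) k C (H : @ctx X k C) (Z1 Z2 W1 W2 : kset X k) (x1 x2 : X) :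
  Real C W1 W2 x1 x2 -> x1 \in val W1 -> x1 \notin val W2 -> x2 \in val W1 -> x2 \in val W2 ->
  #|val W1 :&: val W2| = #|val Z1 :&: val Z2| -> T2 C Z1 Z2.
Proof.
move=> R a1 a2 a3 a4 hc y1 y2 b1 b2 b3 b4.
apply: (transport H R) => //; rewrite ?(negbTE a2) ?(negbTE b2) ?a3 ?b3 //.
by rewrite eq_sym (memneq a4 a2) eq_sym (memneq b4 b2).
Qed.

Lemma T3_of (X : finType) k C (H : @ctx X k C) (Z1 Z2 W1 W2 : kset X k) (x1 x2 : X) :
  Real C W1 W2 x1 x2 -> x1 \in val W1 -> x1 \in val W2 -> x2 \in val W2 -> x2 \notin val W1 ->
  #|val W1 :&: val W2| = #|val Z1 :&: val Z2| -> T3 C Z1 Z2.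
Proof.
move=> R a1 a2 a3 a4 hc y1 y2 b1 b2 b3 b4.
apply: (transport H R) => //; rewrite ?(negbTE a4) ?(negbTE b4) ?a2 ?b2 //.
by rewrite (memneq a1 a4) (memneq b1 b4).
Qed.

Lemma T4_of (X : finType) k C (H : @ctx X k C) (Z1 Z2 W1 W2 : kset X k) (x : X) :
  Real C W1 W2 x x -> x \in val W1 -> x \in val W2 ->
  #|val W1 :&: val W2| = #|val Z1 :&: val Z2| -> T4 C Z1 Z2.
Proof.
move=> R a1 a2 hc y b1 b2.
by apply: (transport H R) => //; rewrite ?a1 ?a2 ?b1 ?b2 ?eqxx.
Qed.

Lemma T5_of (X : finType) k C (H : @ctx X k C) (Z1 Z2 W1 W2 : kset X k) (x1 x2 : X) :
  Real C W1 W2 x1 x2 -> x1 \in val W1 -> x1 \in val W2 -> x2 \in val W1 -> x2 \in val W2 ->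
  x1 != x2 ->
  #|val W1 :&: val W2| = #|val Z1 :&: val Z2| -> T5 C Z1 Z2.
Proof.
move=> R a1 a2 a3 a4 a5 hc y1 y2 b1 b2 b3 b4 b5.
by apply: (transport H R) => //; rewrite ?a2 ?a3 ?b2 ?b3 ?(negbTE a5) ?(negbTE b5).
Qed.

Lemma T23 (X : finType) k C (H : @ctx X k C) (Z1 Z2 : kset X k) u p :
  u \in val Z1 -> u \notin val Z2 -> p \in val Z1 -> p \in val Z2 ->
  T2 C Z1 Z2 -> T3 C Z1 Z2.
Proof.
move=> h1 h2 h3 h4 T.
apply: (T3_of H (real_swap (T _ _ h1 h2 h3 h4))) => //.
by rewrite setIC.
Qed.

Lemma T32 (X : finType) k C (H : @ctx X k C) (Z1 Z2 : kset X k) w p :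
  w \in val Z2 -> w \notin val Z1 -> p \in val Z1 -> p \in val Z2 ->
  T3 C Z1 Z2 -> T2 C Z1 Z2.
Proof.
move=> h1 h2 h3 h4 T.
apply: (T2_of H (real_swap (T _ _ h3 h4 h1 h2))) => //.
by rewrite setIC.
Qed.

Lemma pick1 (X : finType) (S : {set X}) : 0 < #|S| -> exists x, x \in S.
Proof. by move/card_gt0P. Qed.

Lemma pick2 (X : finType) (S : {set X}) : 1 < #|S| -> exists x y, [/\ x \in S, y \in S & x != y].
Proof. by move/card_gt1P. Qed.

Lemma pick_other (X : finType) (S : {set X}) q : 1 < #|S| -> exists x, x \in S /\ x != q.
Proof.
move=> /card_gt1P [x [y [hx hy xy]]].
case: (x =P q) => [E|/eqP ne]; last by exists x.
by exists y; split => //; rewrite -E eq_sym.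
Qed.

Lemma pick_two_other (X : finType) (S : {set X}) q : 2 < #|S| ->
  exists x y, [/\ x \in S, y \in S, x != y, x != q & y != q].
Proof.
move=> h.
have : 1 < #|S :\ q|.
  by move: h; rewrite (cardsD1 q S); case: (q \in S) => // ?; apply: ltnW.
move=> /card_gt1P [x [y]]; rewrite !inE => -[/andP [xq xS] /andP [yq yS] xy].
by exists x, y; split.
Qed.

Ltac memI h := move: h; rewrite inE => /andP [].
Ltac noninj := by rewrite /inj3 ?eqxx ?andbF ?orbT.


Lemma RA (X : finType) k C (H : @ctx X k C) (Z1 Z2 : kset X k) :
  T2 C Z1 Z2 -> T3 C Z1 Z2 -> 1 < #|val Z1 :&: val Z2| -> T1 C Z1 Z2.
Proof.
move=> t2 t3 hI u w h1 h2 h3 h4.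
have [p [q [pI qI pq]]] := pick2 hI; memI pI => p1 p2; memI qI => q1 q2.
have := rule H (t3 _ _ p1 p2 h3 h4) (t2 _ _ h1 h2 p1 p2) (t2 _ _ h1 h2 q1 q2).
by rewrite /g3 eqxx (negbTE pq); apply; noninj.
Qed.

Lemma RB (X : finType) k C (H : @ctx X k C) (Z1 Z2 : kset X k) :
  T2 C Z1 Z2 -> T3 C Z1 Z2 -> 1 < #|val Z1 :\: val Z2| -> 0 < #|val Z2 :\: val Z1| -> T4 C Z1 Z2.
Proof.
move=> t2 t3 hD hE p p1 p2.
have [u [u' [uD u'D uu]]] := pick2 hD; have [w wE] := pick1 hE.
move: uD u'D wE; rewrite !inE => /andP [u2 u1] /andP [u'2 u'1] /andP [w1 w2].
have := rule H (t3 _ _ p1 p2 w2 w1) (t2 _ _ u1 u2 p1 p2) (t2 _ _ u'1 u'2 p1 p2).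
by rewrite /g3 eqxx (negbTE uu); apply; noninj.
Qed.

Lemma RC (X : finType) k C (H : @ctx X k C) (Z1 Z2 : kset X k) :
  T2 C Z1 Z2 -> T3 C Z1 Z2 -> 1 < #|val Z1 :\: val Z2| -> 0 < #|val Z2 :\: val Z1| -> T5 C Z1 Z2.
Proof.
move=> t2 t3 hD hE p q p1 p2 q1 q2 pq.
have [u [u' [uD u'D uu]]] := pick2 hD; have [w wE] := pick1 hE.
move: uD u'D wE; rewrite !inE => /andP [u2 u1] /andP [u'2 u'1] /andP [w1 w2].
have := rule H (t3 _ _ p1 p2 w2 w1) (t2 _ _ u1 u2 q1 q2) (t2 _ _ u'1 u'2 q1 q2).
by rewrite /g3 eqxx (negbTE uu); apply; noninj.
Qed.

Lemma RD (X : finType) k C (H : @ctx X k C) (Z1 Z2 : kset X k) :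
  T1 C Z1 Z2 -> T4 C Z1 Z2 -> 1 < #|val Z2 :\: val Z1| -> T2 C Z1 Z2.
Proof.
move=> t1 t4 hE u p u1 u2 p1 p2.
have [w [w' [wE w'E ww]]] := pick2 hE.
move: wE w'E; rewrite !inE => /andP [w1 w2] /andP [w'1 w'2].
have := rule H (t4 _ p1 p2) (t1 _ _ u1 u2 w2 w1) (t1 _ _ u1 u2 w'2 w'1).
by rewrite /g3 eqxx (negbTE ww); apply; noninj.
Qed.

Lemma RE1 (X : finType) k C (H : @ctx X k C) (Z1 Z2 : kset X k) :
  T1 C Z1 Z2 -> T5 C Z1 Z2 -> 1 < #|val Z2 :\: val Z1| -> 1 < #|val Z1 :&: val Z2| -> T2 C Z1 Z2.
Proof.
move=> t1 t5 hE hI u q u1 u2 q1 q2.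
have [w [w' [wE w'E ww]]] := pick2 hE.
move: wE w'E; rewrite !inE => /andP [w1 w2] /andP [w'1 w'2].
have [p [pI pq]] := pick_other q hI; memI pI => p1 p2.
have := rule H (t5 _ _ p1 p2 q1 q2 pq) (t1 _ _ u1 u2 w2 w1) (t1 _ _ u1 u2 w'2 w'1).
by rewrite /g3 eqxx (negbTE ww); apply; noninj.
Qed.

Lemma RE2 (X : finType) k C (H : @ctx X k C) (Z1 Z2 : kset X k) :
  T1 C Z1 Z2 -> T5 C Z1 Z2 -> 0 < #|val Z2 :\: val Z1| -> 2 < #|val Z1 :&: val Z2| -> T2 C Z1 Z2.
Proof.
move=> t1 t5 hE hI u q u1 u2 q1 q2.
have [w wE] := pick1 hE; move: wE; rewrite !inE => /andP [w1 w2].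
have [p [r [pI rI pr pq rq]]] := pick_two_other q hI; memI pI => p1 p2; memI rI => r1 r2.
have := rule H (t1 _ _ u1 u2 w2 w1) (t5 _ _ p1 p2 q1 q2 pq) (t5 _ _ r1 r2 q1 q2 rq).
by rewrite /g3 eqxx (negbTE pr); apply; noninj.
Qed.

Lemma RF (X : finType) k C (H : @ctx X k C) (Z1 Z2 : kset X k) :
  T5 C Z1 Z2 -> 2 < #|val Z1 :&: val Z2| -> T4 C Z1 Z2.
Proof.
move=> t5 hI q q1 q2.
have [p [r [pI rI pr pq rq]]] := pick_two_other q hI; memI pI => p1 p2; memI rI => r1 r2.
have qp : q != p by rewrite eq_sym.
have qr : q != r by rewrite eq_sym.
have := rule H (t5 _ _ p1 p2 q1 q2 pq) (t5 _ _ q1 q2 p1 p2 qp) (t5 _ _ q1 q2 r1 r2 qr).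
by rewrite /g3 eqxx (negbTE pr); apply; noninj.
Qed.

Lemma RG (X : finType) k C (H : @ctx X k C) (Z1 Z2 : kset X k) :
  T2 C Z1 Z2 -> T4 C Z1 Z2 -> 0 < #|val Z1 :\: val Z2| -> T5 C Z1 Z2.
Proof.
move=> t2 t4 hD p q p1 p2 q1 q2 pq.
have [u uD] := pick1 hD; move: uD; rewrite !inE => /andP [u2 u1].
have := rule H (t4 _ p1 p2) (t4 _ q1 q2) (t2 _ _ u1 u2 q1 q2).
rewrite /g3 eqxx (memneq q2 u2); apply; noninj.
Qed.

Definition mkK (X : finType) k (S : {set X}) (h : #|S| == k) : kset X k := exist _ S h.

Lemma card_ins_del (X : finType) (A : {set X}) x b :
  x \notin A -> b \in A -> #|x |: (A :\ b)| = #|A|.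
Proof.
move=> xA bA; rewrite cardsU1 [in RHS](cardsD1 b A) bA !inE (negbTE xA) andbF.
by [].
Qed.

Lemma card_del (X : finType) (A : {set X}) b n : b \in A -> #|A| = n -> #|A :\ b| = n.-1.
Proof. by move=> bA; rewrite (cardsD1 b A) bA add1n => <-. Qed.

Lemma LI1 (X : finType) (A : {set X}) x b :
  x \notin A -> #|A :&: (x |: (A :\ b))| = #|A :\ b|.
Proof.
move=> xA; apply: eq_card => y; rewrite !inE.
case: (y =P x) => [->|_] /=; first by rewrite (negbTE xA) andbF.
by case: (y \in A); rewrite ?andbT ?andbF.
Qed.

Lemma LI2 (X : finType) (A : {set X}) x b b' :
  #|(x |: (A :\ b)) :&: (x |: (A :\ b'))| = #|x |: (A :\ b :\ b')|.
Proof.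
apply: eq_card => y; rewrite !inE.
case: (y =P x) => [->|_] //=.
by case: (y \in A); case: (y =P b); case: (y =P b'); rewrite ?andbT ?andbF.
Qed.

Lemma S3 (X : finType) k C (H : @ctx X k C) (Z1 Z2 : kset X k) :
  #|val Z1 :&: val Z2| = k.-1 -> T4 C Z1 Z2 \/ T5 C Z1 Z2.
Proof.
move=> hI.
set A := val Z1; have kA : #|A| = k := eqP (valP Z1).
have kB : #|val Z2| = k := eqP (valP Z2).
have k5 := cx_k H.
have [c0 C0] := cx_ne H.
have aA : c0 Z1 \in A := cx_ch H C0 Z1.
set a := c0 Z1 in aA *.
have [x] : exists x, x \in val Z2 :\: A.
  apply: pick1; rewrite cardsD setIC hI kB; lia.
rewrite inE => /andP [xA xB].
have hAa : 1 < #|A :\ a|.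
  by move: kA; rewrite (cardsD1 a A) aA; lia.
have [b [b' [bA b'A bb]]] := pick2 hAa.
move: bA b'A; rewrite !inE => /andP [ba bA] /andP [b'a b'A].
have step : forall b0, b0 \in A -> b0 != a -> forall h : #|x |: (A :\ b0)| == k,
    (T4 C Z1 Z2 \/ T5 C Z1 Z2) \/ c0 (mkK h) = x.
  move=> b0 b0A b0a h.
  have := cx_ch H C0 (mkK h); rewrite /= !inE.
  case: (c0 (mkK h) =P x) => [->|/eqP ne] /=; first by right.
  move=> /andP [_ vA]; left.
  have R : Real C Z1 (mkK h) a (c0 (mkK h)) by exists c0.
  have aZ : a \in val (mkK h).
    by rewrite /mkK /= !inE aA (eq_sym a b0) b0a orbT.
  have vZ := cx_ch H C0 (mkK h).
  have hc : #|val Z1 :&: val (mkK h)| = #|val Z1 :&: val Z2|.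
    rewrite hI /mkK /= LI1 //.
    exact: card_del.
  case: (a =P c0 (mkK h)) => [E|/eqP ne'].
    by left; apply: (T4_of H _ aA aZ hc); rewrite {2}E.
  by right; apply: (T5_of H R aA aZ vA vZ ne' hc).
have h1 : #|x |: (A :\ b)| == k by rewrite card_ins_del // kA.
have h2 : #|x |: (A :\ b')| == k by rewrite card_ins_del // kA.
case: (step b bA ba h1) => [//|E1].
case: (step b' b'A b'a h2) => [//|E2].
left.
have R : Real C (mkK h1) (mkK h2) x x by exists c0.
apply: (T4_of H R); rewrite /= ?inE ?eqxx //.
rewrite LI2 cardsU1 !inE (negbTE xA) !andbF /= hI.
move: kA; rewrite (cardsD1 b A) bA (cardsD1 b' (A :\ b)) !inE b'A eq_sym bb /=.
lia.
Qed.

Lemma card_ins_del2 (X : finType) (A : {set X}) x b b' n :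
  x \notin A -> b \in A -> b' \in A -> b != b' -> #|A| = n -> #|x |: (A :\ b :\ b')| = n.-1.
Proof.
move=> xA bA b'A bb <-; rewrite cardsU1 !inE (negbTE xA) !andbF /=.
rewrite (cardsD1 b A) bA (cardsD1 b' (A :\ b)) !inE b'A eq_sym bb /=.
by rewrite !add1n.
Qed.

Lemma S2 (X : finType) k C (H : @ctx X k C) (Z1 Z2 : kset X k) :
  #|val Z1 :&: val Z2| = k.-1 -> T2 C Z1 Z2 \/ T5 C Z1 Z2.
Proof.
move=> hI.
set A := val Z1; have kA : #|A| = k := eqP (valP Z1).
have kB : #|val Z2| = k := eqP (valP Z2).
have k5 := cx_k H.
have [c0 C0] := cx_ne H.
have aA : c0 Z1 \in A := cx_ch H C0 Z1.
set a := c0 Z1 in aA *.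
have [x] : exists x, x \in val Z2 :\: A.
  apply: pick1; rewrite cardsD setIC hI kB; lia.
rewrite inE => /andP [xA xB].
have hAa : 0 < #|A :\ a|.
  by move: kA; rewrite (cardsD1 a A) aA; lia.
have [p] := pick1 hAa; rewrite !inE => /andP [pa pA].
have h2 : #|x |: (A :\ a)| == k by rewrite card_ins_del // kA.
have h3 : #|x |: (A :\ p)| == k by rewrite card_ins_del // kA.
set Y2 := mkK h2; set Y3 := mkK h3.
have xY3 : x \in val Y3 by rewrite /Y3 /mkK /= !inE eqxx.
have aY3 : a \in val Y3 by rewrite /Y3 /mkK /= !inE aA (eq_sym a p) pa orbT.
have c13 : #|val Z1 :&: val Y3| = #|val Z1 :&: val Z2|.
  by rewrite hI /Y3 /mkK /= LI1 //; exact: card_del.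
have := cx_ch H C0 Y3.
set v := c0 Y3 => vY3.
case: (v =P x) => [vx|/eqP vx].
  left; have R : Real C Y3 Z1 x a by exists c0.
  by apply: (T2_of H R) => //; rewrite setIC.
have vA : v \in A.
  by move: vY3; rewrite /Y3 /mkK /= !inE (negbTE vx) /= => /andP [].
case: (a =P v) => [av|/eqP av]; last first.
  right; have R : Real C Z1 Y3 a v by exists c0.
  exact: (T5_of H R aA aY3 vA vY3 av c13).
left.
have := cx_ch H C0 Y2.
set r := c0 Y2 => rY2.
have aY2 : a \notin val Y2 by rewrite /Y2 /mkK /= !inE eqxx /= (memneq aA xA).
case: (r =P p) => [rp|/eqP rp].
  have R : Real C Z1 Y2 a p by rewrite -rp; exists c0.
  apply: (T2_of H R aA aY2 pA); first by rewrite -rp.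
  by rewrite hI /Y2 /mkK /= LI1 //; exact: card_del.
have R : Real C Y3 Y2 a r by exists c0; rewrite av.
apply: (T2_of H R aY3 aY2 _ rY2).
  move: rY2; rewrite /Y3 /Y2 /mkK /= !inE => /orP [->//|/andP [_ ->]].
  by rewrite rp orbT.
by rewrite hI /Y3 /Y2 /mkK /= LI2; apply: card_ins_del2.
Qed.

Lemma card_I1 (X : finType) (S T : {set X}) z :
  z \in S -> z \in T -> (forall y, y \in S -> y \in T -> y = z) -> #|S :&: T| = 1.
Proof.
move=> zS zT Hy; rewrite -(cards1 z); apply: eq_card => y.
rewrite !inE; apply/andP/eqP => [[]|->]; [exact: Hy | by split].
Qed.

Lemma ar1 k : 5 <= k -> true + k.-1 == k.
Proof. move=> h; apply/eqP; lia. Qed.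

Lemma ar2 k : 5 <= k -> true + (true + k.-1.-1) == k.
Proof. move=> h; apply/eqP; lia. Qed.

Lemma S4 (X : finType) k C (H : @ctx X k C) (Z1 Z2 : kset X k) :
  #|val Z1 :&: val Z2| = 1 -> T1 C Z1 Z2.
Proof.
move=> hI.
set A := val Z1; have kA : #|A| = k := eqP (valP Z1).
have kB : #|val Z2| = k := eqP (valP Z2).
have k5 := cx_k H.
have [c0 C0] := cx_ne H.
have aA : c0 Z1 \in A := cx_ch H C0 Z1.
set a := c0 Z1 in aA *.
have [Q [kQ QA]] : exists Q : {set X}, #|Q| = k.-1 /\ forall y, y \in Q -> y \notin A.
  exists (val Z2 :\: A); split; first by rewrite cardsD setIC hI kB subn1.
  by move=> y; rewrite inE => /andP [].
have hAa : 1 < #|A :\ a|.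
  by move: kA; rewrite (cardsD1 a A) aA; lia.
have [b [b' [bA b'A bb]]] := pick2 hAa.
move: bA b'A; rewrite !inE => /andP [ba bA] /andP [b'a b'A].
have [t tQ] : exists t, t \in Q by apply: pick1; rewrite kQ; lia.
have tA := QA _ tQ.
have bQ : b \notin Q by apply: contraL bA; exact: QA.
have b'Q : b' \notin Q by apply: contraL b'A; exact: QA.
have aQ : a \notin Q by apply: contraL aA; exact: QA.

have bQF := negbTE bQ; have b'QF := negbTE b'Q; have aQF := negbTE aQ.
have tAF := negbTE tA.
have bbF : (b == b') = false by apply: negbTE.
have b'bF : (b' == b) = false by rewrite eq_sym.
have abF : (a == b) = false by rewrite eq_sym; apply: negbTE.
have ab'F : (a == b') = false by rewrite eq_sym; apply: negbTE.
have tbF : (t == b) = false by rewrite eq_sym (memneq bA tA).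
have tb'F : (t == b') = false by rewrite eq_sym (memneq b'A tA).
have btF : (b == t) = false by rewrite (memneq bA tA).
have b'tF : (b' == t) = false by rewrite (memneq b'A tA).
have Ef := (bQF, b'QF, aQF, tAF, bbF, b'bF, abF, ab'F, tbF, tb'F, btF, b'tF).
have hW : #|b |: Q| == k by rewrite cardsU1 bQ kQ ar1.
have hW' : #|b' |: Q| == k by rewrite cardsU1 b'Q kQ ar1.
have hV : #|t |: (A :\ b)| == k by rewrite card_ins_del // kA.
have hV' : #|t |: (A :\ b')| == k by rewrite card_ins_del // kA.
have hU : #|b |: (b' |: (Q :\ t))| == k.
  by rewrite cardsU1 cardsU1 (card_del tQ kQ) !inE ?Ef /= ar2.
set W := mkK hW; set W' := mkK hW'; set V := mkK hV; set V' := mkK hV'; set U := mkK hU.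
have cW : #|val Z1 :&: val W| = #|val Z1 :&: val Z2|.
  rewrite hI; apply: (card_I1 (z := b)) => //; first by rewrite /W /mkK /= !inE eqxx.
  by move=> y yA; rewrite /W /mkK /= !inE => /orP [/eqP //|/QA]; rewrite yA.
have cW' : #|val Z1 :&: val W'| = #|val Z1 :&: val Z2|.
  rewrite hI; apply: (card_I1 (z := b')) => //; first by rewrite /W' /mkK /= !inE eqxx.
  by move=> y yA; rewrite /W' /mkK /= !inE => /orP [/eqP //|/QA]; rewrite yA.
have cWV : #|val W :&: val V| = #|val Z1 :&: val Z2|.
  rewrite hI; apply: (card_I1 (z := t)); rewrite /W /V /mkK /= ?inE ?eqxx ?tQ ?orbT //.
  move=> y; rewrite !inE => /orP [/eqP ->|yQ]; first by rewrite ?inE !Ef eqxx.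
  by case/orP => [/eqP //|/andP [_ yA]]; move: (QA _ yQ); rewrite yA.
have cWV' : #|val W' :&: val V'| = #|val Z1 :&: val Z2|.
  rewrite hI; apply: (card_I1 (z := t)); rewrite /W' /V' /mkK /= ?inE ?eqxx ?tQ ?orbT //.
  move=> y; rewrite !inE => /orP [/eqP ->|yQ]; first by rewrite ?inE !Ef eqxx.
  by case/orP => [/eqP //|/andP [_ yA]]; move: (QA _ yQ); rewrite yA.
have cVU : #|val V :&: val U| = #|val Z1 :&: val Z2|.
  rewrite hI; apply: (card_I1 (z := b')); rewrite /U /V /mkK /= ?inE ?eqxx ?b'A ?Ef ?orbT //.
  move=> y; rewrite !inE => /orP [/eqP ->|/andP [yb yA]]; first by rewrite ?inE ?Ef ?eqxx ?andbF.
  case/orP => [/eqP E|/orP [/eqP //|/andP [_ yQ]]]; first by move: yb; rewrite E eqxx.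
  by move: (QA _ yQ); rewrite yA.
have cV'U : #|val V' :&: val U| = #|val Z1 :&: val Z2|.
  rewrite hI; apply: (card_I1 (z := b)); rewrite /U /V' /mkK /= ?inE ?eqxx ?bA ?Ef ?orbT //.
  move=> y; rewrite !inE => /orP [/eqP ->|/andP [yb yA]]; first by rewrite ?inE ?Ef ?eqxx ?andbF.
  case/orP => [/eqP //|/orP [/eqP E|/andP [_ yQ]]]; first by move: yb; rewrite E eqxx.
  by move: (QA _ yQ); rewrite yA.
have cWm := cx_ch H C0 W.
case: (c0 W =P b) => [EW|/eqP nW]; last first.
  have R : Real C Z1 W a (c0 W) by exists c0.
  have cWQ : c0 W \in Q by move: cWm; rewrite /W /mkK /= !inE (negbTE nW).
  apply: (T1_of H R aA _ cWm (QA _ cWQ) cW).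
  by rewrite /W /mkK /= !inE abF aQF.
have cW'm := cx_ch H C0 W'.
case: (c0 W' =P b') => [EW'|/eqP nW']; last first.
  have R : Real C Z1 W' a (c0 W') by exists c0.
  have cWQ : c0 W' \in Q by move: cW'm; rewrite /W' /mkK /= !inE (negbTE nW').
  apply: (T1_of H R aA _ cW'm (QA _ cWQ) cW').
  by rewrite /W' /mkK /= !inE ab'F aQF.
have cVm := cx_ch H C0 V.
case: (c0 V =P t) => [EV|/eqP nV]; last first.
  have R : Real C W V b (c0 V) by exists c0.
  have := cVm; rewrite /V /mkK /= !inE (negbTE nV) /= => /andP [cVb cVA].
  apply: (T1_of H R _ _ cVm _ cWV).
  - by rewrite /W /mkK /= !inE eqxx.
  - by rewrite /V /mkK /= !inE btF eqxx.
  rewrite /W /mkK /= !inE (negbTE cVb) /=; apply/negP => cVQ.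
  by move: (QA _ cVQ); rewrite cVA.
have cV'm := cx_ch H C0 V'.
case: (c0 V' =P t) => [EV'|/eqP nV']; last first.
  have R : Real C W' V' b' (c0 V') by exists c0.
  have := cV'm; rewrite /V' /mkK /= !inE (negbTE nV') /= => /andP [cVb cVA].
  apply: (T1_of H R _ _ cV'm _ cWV').
  - by rewrite /W' /mkK /= !inE eqxx.
  - by rewrite /V' /mkK /= !inE b'tF eqxx.
  rewrite /W' /mkK /= !inE (negbTE cVb) /=; apply/negP => cVQ.
  by move: (QA _ cVQ); rewrite cVA.
have cUm := cx_ch H C0 U.
have tU : t \notin val U by rewrite /U /mkK /= !inE tbF tb'F eqxx.
case: (c0 U =P b') => [EU|/eqP nU].
  have R : Real C V' U t b' by exists c0; rewrite EV' EU.
  apply: (T1_of H R _ tU _ _ cV'U).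
  - by rewrite /V' /mkK /= !inE eqxx.
  - by rewrite /U /mkK /= !inE eqxx orbT.
  - by rewrite /V' /mkK /= !inE b'tF eqxx.
have R : Real C V U t (c0 U) by exists c0.
apply: (T1_of H R _ tU cUm _ cVU); first by rewrite /V /mkK /= !inE eqxx.
move: cUm; rewrite /U /V /mkK /= !inE (negbTE nU) /= => /orP [/eqP ->|/andP [ut uQ]].
  by rewrite btF eqxx.
rewrite (negbTE ut) /=; apply/negP => /andP [_ uA].
by move: (QA _ uQ); rewrite uA.
Qed.

Lemma single (X : finType) k C (H : @ctx X k C) (Z : kset X k) y :
  y \in val Z -> Real C Z Z y y.
Proof.
move=> yZ; have [c0 C0] := cx_ne H.
have R : Real C Z Z (c0 Z) (c0 Z) by exists c0.
have cZ := cx_ch H C0 Z.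
by apply: (real_move H R); rewrite ?cZ ?yZ ?eqxx.
Qed.

Lemma K1 (X : finType) k C (H : @ctx X k C) (Z1 Z2 : kset X k) u :
  u \in val Z1 -> u \notin val Z2 ->
  T1 C Z1 Z2 \/ (T2 C Z1 Z2 /\ T3 C Z1 Z2).
Proof.
move=> u1 u2.
have [c [Cc E _]] := single H u1.
have R : Real C Z1 Z2 u (c Z2) by exists c.
have c2 := cx_ch H Cc Z2.
case c1 : (c Z2 \in val Z1).
  right; have t2 := T2_of H R u1 u2 c1 c2 erefl.
  by split => //; apply: (T23 H u1 u2 c1 c2 t2).
by left; apply: (T1_of H R u1 u2 c2 _ erefl); rewrite c1.
Qed.

Lemma K2 (X : finType) k C (H : @ctx X k C) (Z1 Z2 : kset X k) p w :
  p \in val Z1 -> p \in val Z2 -> w \in val Z2 -> w \notin val Z1 ->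
  (T2 C Z1 Z2 /\ T3 C Z1 Z2) \/ T4 C Z1 Z2 \/ (T5 C Z1 Z2 /\ 1 < #|val Z1 :&: val Z2|).
Proof.
move=> p1 p2 w2 w1.
have [c [Cc E _]] := single H p1.
have R : Real C Z1 Z2 p (c Z2) by exists c.
have c2 := cx_ch H Cc Z2.
case c1 : (c Z2 \in val Z1); last first.
  have t3 := T3_of H R p1 p2 c2 (negbT c1) erefl.
  by left; split => //; apply: (T32 H w2 w1 p1 p2 t3).
right; case: (p =P c Z2) => [pc|/eqP pc].
  by left; apply: (T4_of H (x := p)) p1 p2 erefl; rewrite {2}pc.
right; split; first exact: (T5_of H R p1 p2 c1 c2 pc erefl).
by apply/card_gt1P; exists p, (c Z2); rewrite !inE p1 p2 c1 c2.
Qed.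

Lemma arith_cases k s : 5 <= k -> s < k ->
  [\/ s = 0, s = 1 /\ 1 < k - s, [/\ s = k.-1, 2 < s & k - s = 1] | 1 < s /\ 1 < k - s].
Proof.
move=> h1 h2.
case: (s =P 0) => [->|n0]; first by apply: Or41.
case: (s =P 1) => [e1|n1]; first by apply: Or42; split => //; lia.
case: (s =P k.-1) => [e|n]; first by apply: Or43; split => //; lia.
by apply: Or44; split; lia.
Qed.

Lemma pair_full (X : finType) k C (H : @ctx X k C) (Z1 Z2 : kset X k) :
  Z1 != Z2 -> [/\ T1 C Z1 Z2, T2 C Z1 Z2, T3 C Z1 Z2, T4 C Z1 Z2 & T5 C Z1 Z2].
Proof.
move=> neZ.
have kA : #|val Z1| = k := eqP (valP Z1).
have kB : #|val Z2| = k := eqP (valP Z2).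
have k5 := cx_k H.
set s := #|val Z1 :&: val Z2|.
have hD : #|val Z1 :\: val Z2| = k - s by rewrite cardsD kA.
have hE : #|val Z2 :\: val Z1| = k - s by rewrite cardsD kB setIC.
have sk : s <= k by rewrite /s; apply: leq_trans (subset_leq_card (subsetIl _ _)) _; rewrite kA.
have sk' : s != k.
  apply: contra neZ => /eqP sk'; apply/eqP; apply: val_inj; apply/eqP.
  rewrite eqEcard kA kB leqnn andbT.
  have : #|val Z1 :\: val Z2| == 0 by rewrite hD sk' subnn.
  by rewrite cards_eq0 setD_eq0.
have sl : 0 < k - s by rewrite subn_gt0 ltn_neqAle sk' sk.
have [u] : exists u, u \in val Z1 :\: val Z2 by apply: pick1; rewrite hD.
rewrite inE => /andP [u2 u1].
have [w] : exists w, w \in val Z2 :\: val Z1 by apply: pick1; rewrite hE.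
rewrite inE => /andP [w1 w2].
have vac5 : s <= 1 -> T5 C Z1 Z2.
  move=> hs y1 y2 a1 a2 b1 b2 ne; exfalso.
  have : 1 < s by apply/card_gt1P; exists y1, y2; rewrite !inE a1 a2 b1 b2.
  by rewrite ltnNge hs.
have sl' : s < k by rewrite ltn_neqAle sk' sk.
have [u3 w3] : 0 < #|val Z1 :\: val Z2| /\ 0 < #|val Z2 :\: val Z1| by rewrite hD hE.
case: (arith_cases k5 sl') => [s0|[s1 j2]|[sj s2 j1]|[s2 j2]].
- have vac : forall y, y \in val Z1 -> y \in val Z2 -> False.
    move=> y a b; have : y \in val Z1 :&: val Z2 by rewrite inE a b.
    by move/cards0_eq: s0 => ->; rewrite inE.
  split.
  + case: (K1 H u1 u2) => // -[t2 _].
    have [c [Cc E _]] := single H u1.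
    have cZ2 : c Z2 \in val Z2 := cx_ch H Cc Z2.
    move=> y1 y2 a1 a2 b1 b2; apply: (T1_of H (x1 := u) (x2 := c Z2)) => //.
    all: try by exists c.
    all: try by [].
    apply/negP => cZ; exact: (vac _ cZ cZ2).
  + by move=> y1 y2 _ _ a b; case: (vac _ a b).
  + by move=> y1 y2 a b; case: (vac _ a b).
  + by move=> y a b; case: (vac _ a b).
  + by apply: vac5; rewrite s0.
- have t1 : T1 C Z1 Z2 := S4 H s1.
  have [p] : exists p, p \in val Z1 :&: val Z2 by apply: pick1; rewrite -/s s1.
  rewrite inE => /andP [p1 p2].
  have t5 : T5 C Z1 Z2 by apply: vac5; rewrite s1.
  case: (K2 H p1 p2 w2 w1) => [[t2 t3]|[t4|[_ hs]]].
  + by split => //; apply: (RB H t2 t3); rewrite ?hD ?hE.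
  + have t2 : T2 C Z1 Z2 by apply: (RD H t1 t4); rewrite hE.
    by split => //; apply: (T23 H u1 u2 p1 p2 t2).
  + by move: hs; rewrite -/s s1.
- have [p] : exists p, p \in val Z1 :&: val Z2 by apply: pick1; rewrite -/s; apply: ltn_trans s2.
  rewrite inE => /andP [p1 p2].
  have t4 : T4 C Z1 Z2.
    case: (S3 H (_ : s = k.-1)) => // t5; exact: (RF H t5 s2).
  have t5 : T5 C Z1 Z2.
    case: (S2 H (_ : s = k.-1)) => // t2; apply: (RG H t2 t4 u3).
  case: (K1 H u1 u2) => [t1|[t2 t3]].
  + have t2 : T2 C Z1 Z2 by apply: (RE2 H t1 t5 w3 s2).
    by split => //; apply: (T23 H u1 u2 p1 p2 t2).
  + by split => //; apply: (RA H t2 t3); apply: ltn_trans s2.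
- have [p] : exists p, p \in val Z1 :&: val Z2 by apply: pick1; apply: ltn_trans s2.
  rewrite inE => /andP [p1 p2].
  have fin23 : T2 C Z1 Z2 -> T3 C Z1 Z2 -> [/\ T1 C Z1 Z2, T2 C Z1 Z2, T3 C Z1 Z2, T4 C Z1 Z2 & T5 C Z1 Z2].
    move=> t2 t3; split => //.
    + exact: (RA H t2 t3 s2).
    + by apply: (RB H t2 t3); rewrite ?hD ?hE.
    + by apply: (RC H t2 t3); rewrite ?hD ?hE.
  case: (K1 H u1 u2) => [t1|[t2 t3]]; last exact: fin23.
  case: (K2 H p1 p2 w2 w1) => [[t2 t3]|[t4|[t5 _]]]; first exact: fin23.
  + have t2 : T2 C Z1 Z2 by apply: (RD H t1 t4); rewrite hE.
    by apply: fin23 => //; apply: (T23 H u1 u2 p1 p2 t2).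
  + have t2 : T2 C Z1 Z2 by apply: (RE1 H t1 t5); rewrite ?hE.
    by apply: fin23 => //; apply: (T23 H u1 u2 p1 p2 t2).
Qed.
Unset Implicit Arguments.

Theorem claim12p2 (X : finType) (k : nat) (F : forall n, op X n -> Prop)
  (C : {ffun kset X k -> X} -> Prop) :
  5 <= k -> 7 <= #|X| - k ->
  is_clone F ->
  (F 3 (@gstar X) \/
   (forall a1 a2 a3 : X, a1 != a2 -> a1 != a3 -> a2 != a3 ->
      exists g : op X 3, F 3 g /\ g (tup3 a1 a2 a3) = a1 /\
        (forall a : {ffun 'I_3 -> X}, ~~ injectiveb a -> g a = gstar a))) ->
  (exists c, C c) ->
  (forall c, C c -> choice_fun c) ->
  symmetric_family C ->
  (forall n (f : op X n), F n f -> closed_under C f) ->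
  full C.
Proof.
move=> k5 nk _ Hg Hne Hch Hsym Hcl.
have X3 : 2 < #|X| by apply: leq_trans _ (leq_trans nk (leq_subr _ _)).
have Csel : forall c1 c2 c3, C c1 -> C c2 -> C c3 -> forall i, C (sel3 c1 c2 c3 i).
  by move=> c1 c2 c3 C1 C2 C3 [[|[|[|i]]] Hi].
have Hc : ctx C.
  split => //.
  - move=> c1 c2 c3 Z1 Z2 C1 C2 C3 Hn.
    have [m [Fm Gm E1 E2]] := exists_op X3 Hg Hn.
    exists [ffun Y => m [ffun i => sel3 c1 c2 c3 i Y]]; split.
    + exact: (Hcl 3 m Fm (sel3 c1 c2 c3) (Csel _ _ _ C1 C2 C3)).
    + by rewrite ffunE sel3_tup3 E1.
    + by rewrite ffunE sel3_tup3 E2.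
  - move=> c1 c2 c3 C1 C2 C3.
    have [x0 _] : exists x0 : X, x0 \in [set: X] by apply/card_gt0P; rewrite cardsT; apply: ltnW; apply: ltnW.
    have Hn : ~~ inj3 x0 x0 x0 || ~~ inj3 x0 x0 x0 by rewrite /inj3 eqxx.
    have [m [Fm Gm _ _]] := exists_op X3 Hg Hn.
    exists [ffun Y => m [ffun i => sel3 c1 c2 c3 i Y]]; split.
    + exact: (Hcl 3 m Fm (sel3 c1 c2 c3) (Csel _ _ _ C1 C2 C3)).
    + move=> Z HnZ; rewrite ffunE sel3_tup3 Gm ?gstar_tup3 //.
      exact: tup3_ninj.
move=> t Ht; apply: (BP Hc) => Z1 Z2.
change (Real C Z1 Z2 (t Z1) (t Z2)).
have y1 : t Z1 \in val Z1 := Ht Z1.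
have y2 : t Z2 \in val Z2 := Ht Z2.
case: (Z1 =P Z2) => [E|/eqP ne].
  by rewrite -E; exact (single Hc y1).
have [t1 t2 t3 t4 t5] := pair_full Hc ne.
case a: (t Z1 \in val Z2); case b: (t Z2 \in val Z1).
- case: (t Z1 =P t Z2) => [E|/eqP ne']; last exact: t5.
  by rewrite E; apply: t4.
- by apply: t3 => //; rewrite b.
- by apply: t2 => //; rewrite a.
- by apply: t1 => //; rewrite ?a ?b.
Qed.
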